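(* Let $H$ be a separable infinite-dimensional complex Hilbert space and let $X$ be a closed subspace of $H$ whose dimension and codimension are both infinite. Then there is a closed subspace $Q$ of $H$ of infinite dimension and infinite codimension such that $Q\cap X^{\perp}=0$ and $Q^{\perp}\cap X^{\perp}=0$. *)

(* Defs.v *)
From HB Require Import structures.
From mathcomp Require Import all_boot all_order all_algebra.
From mathcomp Require Import complex.
From mathcomp Require Import reals.
Set Implicit Arguments. Unset Strict Implicit. Unset Printing Implicit Defensive.
Import Order.TTheory GRing.Theory Num.Theory.
Local Open Scope ring_scope.

Section Hilbert.
Variables (R : realType) (H : lmodType R[i]) (ip : H -> H -> R[i]).

Definition is_inner_product : Prop :=
  [/\ (forall (a : R[i]) (x y z : H), ip (a *: x + y) z = a * ip x z + ip y z),
      (forall x y : H, ip y x = (ip x y)^*),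
      (forall x : H, 0 <= ip x x) &
      (forall x : H, ip x x = 0 -> x = 0)].

Definition nrm2 (x : H) : R[i] := ip x x.

Definition cauchy_seq (u : nat -> H) : Prop :=
  forall e : R[i], 0 < e -> exists N : nat, forall m n : nat,
    (N <= m)%N -> (N <= n)%N -> nrm2 (u m - u n) < e.

Definition converges_to (u : nat -> H) (l : H) : Prop :=
  forall e : R[i], 0 < e -> exists N : nat, forall n : nat,
    (N <= n)%N -> nrm2 (u n - l) < e.

Definition complete_ip : Prop :=
  forall u : nat -> H, cauchy_seq u -> exists l : H, converges_to u l.

Definition separable_ip : Prop :=
  exists d : nat -> H, forall (x : H) (e : R[i]), 0 < e ->
    exists n : nat, nrm2 (x - d n) < e.

Definition is_hilbert_space : Prop :=
  [/\ is_inner_product, complete_ip & separable_ip].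

Definition lin_indep (n : nat) (v : 'I_n -> H) : Prop :=
  forall c : 'I_n -> R[i], \sum_(i < n) c i *: v i = 0 -> forall i, c i = 0.

Definition lin_indep_mod (X : H -> Prop) (n : nat) (v : 'I_n -> H) : Prop :=
  forall c : 'I_n -> R[i], X (\sum_(i < n) c i *: v i) -> forall i, c i = 0.

Definition is_subspace (X : H -> Prop) : Prop :=
  [/\ X 0, (forall x y, X x -> X y -> X (x + y)) &
      (forall (a : R[i]) x, X x -> X (a *: x))].

Definition is_closed (X : H -> Prop) : Prop :=
  forall (u : nat -> H) (l : H), (forall n, X (u n)) -> converges_to u l -> X l.

Definition closed_subspace (X : H -> Prop) : Prop := is_subspace X /\ is_closed X.

Definition infinite_dim (X : H -> Prop) : Prop :=
  forall n : nat, exists v : 'I_n -> H, (forall i, X (v i)) /\ lin_indep v.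

(* codim X = dim (H / X) = infinity *)
Definition infinite_codim (X : H -> Prop) : Prop :=
  forall n : nat, exists v : 'I_n -> H, lin_indep_mod X v.

Definition perp (X : H -> Prop) : H -> Prop :=
  fun y => forall x, X x -> ip x y = 0.

End Hilbert.

(* Main.v *)
Require Import Defs.
From HB Require Import structures.
From mathcomp Require Import all_boot all_order all_algebra.
From mathcomp Require Import complex.
From mathcomp Require Import boolp classical_sets reals.
From mathcomp Require Import ring lra zify.
From Stdlib Require Import ClassicalEpsilon.
Import Order.TTheory GRing.Theory Num.Theory.
Local Open Scope complex_scope.
Local Open Scope ring_scope.

Set Implicit Arguments. Unset Strict Implicit. Unset Printing Implicit Defensive.

Section Basic.
Variable R : realType.
Local Notation Re := (@complex.Re R).
Local Notation Im := (@complex.Im R).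

Definition a2 (z : R[i]) : R := Re z ^+ 2 + Im z ^+ 2.

Lemma a2_ge0 z : 0 <= a2 z.
Proof. rewrite /a2; nra. Qed.

Lemma a2_eq0 z : a2 z = 0 -> z = 0.
Proof.
case: z => a b; rewrite /a2 /= => h.
have ha : a = 0 by nra.
have hb : b = 0 by nra.
by rewrite ha hb.
Qed.

Lemma a2_0 : a2 0 = 0.
Proof. by rewrite /a2 /=; lra. Qed.

Lemma mulCJ (z : R[i]) : z * z^* = (a2 z)%:C.
Proof.
case: z => a b; rewrite /a2 /=.
apply/eqP; rewrite eq_complex /=; apply/andP; split; apply/eqP; lra.
Qed.

Lemma a2J z : a2 (z^*) = a2 z.
Proof. by case: z => a b; rewrite /a2 /=; lra. Qed.

Lemma a2_realM (r : R) z : a2 (r%:C * z) = r ^+ 2 * a2 z.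
Proof. by case: z => a b; rewrite /a2 /=; lra. Qed.

Lemma a2_real (r : R) : a2 (r%:C) = r ^+ 2.
Proof. by rewrite /a2 /=; lra. Qed.

Lemma a2D_le z w : a2 (z + w) <= 2 * a2 z + 2 * a2 w.
Proof.
case: z => a b; case: w => c d; rewrite /a2 /=.
have := sqr_ge0 (a - c); have := sqr_ge0 (b - d); nra.
Qed.

Lemma a2N z : a2 (- z) = a2 z.
Proof. by case: z => a b; rewrite /a2 /=; lra. Qed.

Lemma ReD (z w : R[i]) : Re (z + w) = Re z + Re w.
Proof. by case: z => a b; case: w => c d. Qed.

Lemma ReN (z : R[i]) : Re (- z) = - Re z.
Proof. by case: z. Qed.

Lemma ReJ (z : R[i]) : Re (z^*) = Re z.
Proof. by case: z. Qed.

Lemma conjR (r : R) : (r%:C)^* = r%:C :> R[i].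
Proof. exact: conjc_real. Qed.

Lemma ltc0R (r : R) : 0 < r -> (0 : R[i]) < r%:C.
Proof. by move=> h; rewrite ltcE /= eqxx. Qed.

Lemma Re_real (r : R) : Re (r%:C) = r.
Proof. by []. Qed.

Lemma Re_realM (r : R) z : Re (r%:C * z) = r * Re z.
Proof. by case: z => a b /=; lra. Qed.

Lemma ge0_real (z : R[i]) : 0 <= z -> z = (Re z)%:C /\ 0 <= Re z.
Proof.
case: z => a b; rewrite lecE /= => /andP[/eqP hb ha].
by split => //; rewrite hb.
Qed.

Lemma gt0_real (z : R[i]) : 0 < z -> z = (Re z)%:C /\ 0 < Re z.
Proof.
case: z => a b; rewrite ltcE /= => /andP[/eqP hb ha].
by split => //; rewrite hb.
Qed.

Lemma small_le0 (A : R) : (forall e, 0 < e -> A <= e) -> A <= 0.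
Proof.
move=> h; rewrite leNgt; apply/negP => hA.
have := h (A / 2); rewrite divr_gt0 // => /(_ isT); lra.
Qed.

Definition iS (k : nat) : R := (k.+1%:R)^-1.

Lemma iS_gt0 k : 0 < iS k.
Proof. by rewrite /iS invr_gt0 ltr0Sn. Qed.

Lemma archi_inv (e : R) : 0 < e -> exists k : nat, forall n, (k <= n)%N -> iS n < e.
Proof.
move=> he; have [k hk] := ltr_add_invr he; exists k => n hn; rewrite /iS.
rewrite add0r in hk; apply: le_lt_trans hk.
rewrite lef_pV2 ?posrE ?ltr0n // ler_nat; lia.
Qed.

End Basic.

Section IP.
Variables (R : realType) (H : lmodType R[i]) (ip : H -> H -> R[i]).
Hypothesis hip : is_inner_product ip.
Local Notation Re := (@complex.Re R).
Local Notation Im := (@complex.Im R).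

Lemma ip_lin a x y z : ip (a *: x + y) z = a * ip x z + ip y z.
Proof. by case: hip. Qed.
Lemma ip_sym x y : ip y x = (ip x y)^*.
Proof. by case: hip. Qed.
Lemma ip_ge0 x : 0 <= ip x x.
Proof. by case: hip. Qed.
Lemma ip_def x : ip x x = 0 -> x = 0.
Proof. by case: hip => _ _ _; apply. Qed.

Lemma ip0l z : ip 0 z = 0.
Proof.
have := ip_lin 1 0 0 z; rewrite scaler0 addr0 mul1r => h.
have : ip 0 z + ip 0 z - ip 0 z = ip 0 z - ip 0 z by rewrite -h.
by rewrite addrK subrr.
Qed.

Lemma ipDl x y z : ip (x + y) z = ip x z + ip y z.
Proof. by rewrite -[x in LHS]scale1r ip_lin mul1r. Qed.
Lemma ipZl a x z : ip (a *: x) z = a * ip x z.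
Proof. by rewrite -[a *: x]addr0 ip_lin ip0l addr0. Qed.
Lemma ipNl x z : ip (- x) z = - ip x z.
Proof. by rewrite -scaleN1r ipZl mulN1r. Qed.
Lemma ipBl x y z : ip (x - y) z = ip x z - ip y z.
Proof. by rewrite ipDl ipNl. Qed.

Lemma ip0r z : ip z 0 = 0.
Proof. by rewrite ip_sym ip0l rmorph0 /=. Qed.
Lemma ipDr x y z : ip z (x + y) = ip z x + ip z y.
Proof. by rewrite ip_sym ipDl rmorphD /= -!ip_sym. Qed.
Lemma ipZr a x z : ip z (a *: x) = a^* * ip z x.
Proof. by rewrite ip_sym ipZl rmorphM /= -!ip_sym. Qed.
Lemma ipNr x z : ip z (- x) = - ip z x.
Proof. by rewrite ip_sym ipNl rmorphN /= -!ip_sym. Qed.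
Lemma ipBr x y z : ip z (x - y) = ip z x - ip z y.
Proof. by rewrite ipDr ipNr. Qed.

Lemma ipsuml (I : Type) (r : seq I) (P : pred I) (F : I -> H) z :
  ip (\sum_(i <- r | P i) F i) z = \sum_(i <- r | P i) ip (F i) z.
Proof. exact: (big_morph (fun x => ip x z) (fun x y => ipDl x y z) (ip0l z)). Qed.

Lemma ipsumr (I : Type) (r : seq I) (P : pred I) (F : I -> H) z :
  ip z (\sum_(i <- r | P i) F i) = \sum_(i <- r | P i) ip z (F i).
Proof. exact: (big_morph (fun x => ip z x) (fun x y => ipDr x y z) (ip0r z)). Qed.

Definition N (x : H) : R := Re (ip x x).

Lemma N_ge0 x : 0 <= N x.
Proof. by have [] := ge0_real (ip_ge0 x). Qed.

Lemma ipxx x : ip x x = (N x)%:C.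
Proof. by have [] := ge0_real (ip_ge0 x). Qed.

Lemma N_eq0 x : N x = 0 -> x = 0.
Proof. by move=> h; apply: ip_def; rewrite ipxx h. Qed.

Lemma N0 : N 0 = 0.
Proof. by rewrite /N ip0l. Qed.

Lemma nrm2E x : nrm2 ip x = (N x)%:C.
Proof. exact: ipxx. Qed.

Lemma N_lt x r : (nrm2 ip x < r%:C) = (N x < r).
Proof. by rewrite nrm2E ltcR. Qed.

Lemma ND x y : N (x + y) = N x + N y + 2 * Re (ip x y).
Proof.
rewrite /N ipDl !ipDr (ip_sym x y) !ReD ReJ; lra.
Qed.

Lemma NZ c x : N (c *: x) = a2 c * N x.
Proof.
by rewrite /N ipZl ipZr mulrA mulCJ ipxx -rmorphM.
Qed.

Lemma NN x : N (- x) = N x.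
Proof. by rewrite -scaleN1r NZ a2N /a2 /=; lra. Qed.

Lemma NBZ x c y : N (x - c *: y) = N x + a2 c * N y - 2 * Re (c^* * ip x y).
Proof.
rewrite ND NN NZ ipNr ipZr ReN; lra.
Qed.

Lemma CS x y : a2 (ip x y) <= N x * N y.
Proof.
have [hy|hy] := eqVneq (N y) 0.
  by rewrite (N_eq0 hy) ip0r a2_0 N0 mulr0.
have ny : 0 < N y by rewrite lt_neqAle eq_sym hy N_ge0.
set b := ip x y.
pose c := ((N y)^-1)%:C * b.
have := N_ge0 (x - c *: y); rewrite NBZ /c rmorphM /= conjR -mulrA (mulrC (b^*)) mulCJ.
rewrite -rmorphM Re_real a2_realM.
set A := a2 b => h.
have hA : 0 <= A by exact: a2_ge0.
have e1 : (N y)^-1 ^+ 2 * A * N y = (N y)^-1 * A.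
  by field.
rewrite e1 in h.
have : (N y)^-1 * A <= N x by lra.
by rewrite ler_pdivrMl // mulrC.
Qed.

Lemma a2_ip_le_small x y (e : R) : N x < e -> a2 (ip x y) <= e * N y.
Proof.
move=> h; apply: le_trans (CS x y) _; apply: ler_wpM2r; [exact: N_ge0|exact: ltW].
Qed.

Lemma perp_closed_subspace (S : H -> Prop) : closed_subspace ip (perp ip S).
Proof.
split; first split.
- by move=> x _; rewrite ip0r.
- by move=> x y hx hy s hs; rewrite ipDr hx // hy // addr0.
- by move=> a x hx s hs; rewrite ipZr hx // mulr0.
move=> u l hu hl s hs.
apply: a2_eq0; apply/eqP; rewrite eq_le a2_ge0 andbT.
apply: small_le0 => e he.
have hpos : 0 < e / (N s + 1) by apply: divr_gt0 => //; have := N_ge0 s; lra.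
have [n hn] := hl _ (ltc0R hpos).
have := hn n (leqnn n); rewrite N_lt => h1.
have : ip s l = - ip s (u n - l) by rewrite ipBr (hu n s hs) sub0r opprK.
move=> ->; rewrite a2N.
have := CS s (u n - l) => h2.
apply: le_trans h2 _.
have hs0 := N_ge0 s.
have : N s * N (u n - l) <= N s * (e / (N s + 1)).
  by apply: ler_wpM2l => //; exact: ltW.
move=> h3; apply: le_trans h3 _.
rewrite mulrA ler_pdivrMr; last lra.
nra.
Qed.

End IP.

Section Proj.
Variables (R : realType) (H : lmodType R[i]) (ip : H -> H -> R[i]).
Hypothesis hip : is_inner_product ip.
Local Notation Re := (@complex.Re R).
Local Notation N := (N ip).

Lemma cauchyR (u : nat -> H) :
  (forall e : R, 0 < e -> exists M, forall m n, (M <= m)%N -> (M <= n)%N -> N (u m - u n) < e) ->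
  cauchy_seq ip u.
Proof.
move=> h e he; have [-> he'] := gt0_real he; have [M hM] := h _ he'.
by exists M => m n hm hn; rewrite (N_lt hip); exact: hM.
Qed.

Lemma convR (u : nat -> H) l : converges_to ip u l ->
  forall e : R, 0 < e -> exists M, forall n, (M <= n)%N -> N (u n - l) < e.
Proof.
move=> h e he; have [M hM] := h _ (ltc0R he).
by exists M => n hn; rewrite -(N_lt hip); exact: hM.
Qed.

Lemma lim_ip (u : nat -> H) l y c : converges_to ip u l ->
  (exists M, forall n, (M <= n)%N -> ip y (u n) = c) -> ip y l = c.
Proof.
move=> hl [M hM]; apply/eqP; rewrite -subr_eq0; apply/eqP; apply: a2_eq0.
apply/eqP; rewrite eq_le a2_ge0 andbT; apply: small_le0 => e he.
have hy := N_ge0 hip y.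
have hpos : 0 < e / (N y + 1) by apply: divr_gt0 => //; lra.
have [K hK] := convR hl hpos.
pose n := maxn M K.
have h1 := hK n (leq_maxr _ _).
have -> : ip y l - c = - ip y (u n - l).
  by rewrite (ipBr hip) (hM n (leq_maxl _ _)) opprB.
rewrite a2N; apply: le_trans (CS hip y (u n - l)) _.
have : N y * N (u n - l) <= N y * (e / (N y + 1)).
  by apply: ler_wpM2l => //; exact: ltW.
move=> h3; apply: le_trans h3 _.
rewrite mulrA ler_pdivrMr; last lra.
nra.
Qed.

Lemma parallelogram a b : N (a + b) + N (a - b) = 2 * N a + 2 * N b.
Proof.
rewrite !(ND hip) (NN hip) (ipNr hip) ReN; lra.
Qed.

Lemma choice_nat (P : nat -> H -> Prop) : (forall k, exists x, P k x) ->
  exists f : nat -> H, forall k, P k (f k).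
Proof.
move=> h; exists (fun k => proj1_sig (constructive_indefinite_description _ (h k))).
by move=> k; case: (constructive_indefinite_description _ (h k)).
Qed.

Lemma two_C_scale (v : H) : (2 : R)%:C *: v = v + v.
Proof.
have -> : (2 : R)%:C = 1 + 1.
  by apply/eqP; rewrite eq_complex /=; apply/andP; split; apply/eqP; lra.
by rewrite scalerDl scale1r.
Qed.

Lemma projection (X : H -> Prop) : closed_subspace ip X -> complete_ip ip ->
  forall h, exists x, X x /\ perp ip X (h - x).
Proof.
move=> [[X0 XD XZ] Xc] hc h.
pose E : set R := fun r => exists x, X x /\ r = N (h - x).
have hinf : has_inf E.
  split; first by exists (N (h - 0)); exists 0.
  by exists 0 => r [x [_ ->]]; exact: N_ge0.
pose d := inf E.
have hd : forall x, X x -> d <= N (h - x).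
  by move=> x hx; apply: (ge_inf hinf.2); exists x.
have hex : forall k : nat, exists x, X x /\ N (h - x) < d + iS R k.
  move=> k; have [r [x [hx ->]] hr] := inf_adherent (iS_gt0 R k) hinf.
  by exists x.
have [f hf] := choice_nat hex.
have XB : forall x y, X x -> X y -> X (x - y).
  by move=> x y hx hy; rewrite -scaleN1r; apply: XD => //; apply: XZ.
have hcb : forall k m, N (f m - f k) <= 2 * iS R k + 2 * iS R m.
  move=> k m.
  have [hk1 hk2] := hf k; have [hm1 hm2] := hf m.
  pose mid := ((2 : R)^-1)%:C *: (f k + f m).
  have hmid : X mid by apply: XZ; apply: XD.
  have hdm := hd _ hmid.
  have e1 : (h - f k) + (h - f m) = (2 : R)%:C *: (h - mid).
    rewrite scalerBr /mid scalerA -rmorphM mulfV ?pnatr_eq0 // scale1r two_C_scale.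
    by rewrite opprD addrACA.
  have e2 : (h - f k) - (h - f m) = f m - f k.
    by rewrite opprB addrC addrA subrK.
  have := parallelogram (h - f k) (h - f m).
  have e4 : (2:R) ^+ 2 = 4 by rewrite expr2; lra.
  rewrite e1 e2 (NZ hip) a2_real e4 => hp.
  have := N_ge0 hip (h - mid).
  lra.
have hcauchy : cauchy_seq ip f.
  apply: cauchyR => e he.
  have [k0 hk0] := archi_inv (divr_gt0 he (ltr0n R 4)).
  exists k0 => m n hm hn.
  have := hcb n m; have := hk0 _ hm; have := hk0 _ hn; lra.
have [x hx] := hc _ hcauchy.
have Xx : X x by apply: Xc hx => n; case: (hf n).
exists x; split => // u hu.
have hnu := N_ge0 hip u.
have hA : forall k, a2 (ip (h - f k) u) <= (N u + 1) * iS R k.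
  move=> k; have [hk1 hk2] := hf k.
  set b := ip (h - f k) u; set A := a2 b.
  pose l := (N u + 1)^-1.
  have hl : 0 < l by rewrite /l invr_gt0; lra.
  have hlN : l * N u <= 1.
    by rewrite /l mulrC ler_pdivrMr; lra.
  have hAge : 0 <= A := a2_ge0 b.
  have hlE : l * (N u + 1) = 1 by rewrite /l mulVf //; lra.
  clearbody l.
  pose c := l%:C * b.
  have := hd (f k + c *: u) (XD _ _ hk1 (XZ _ _ hu)).
  rewrite opprD addrA (NBZ hip) /c rmorphM /= conjR -mulrA (mulrC (b^*)) mulCJ.
  rewrite -rmorphM Re_real a2_realM -/A => h1.
  have h2 : l * A <= iS R k.
    have : (l * A) * (1 - l * N u) >= 0 by apply: mulr_ge0; [apply: mulr_ge0; lra | lra].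
    nra.
  have -> : A = (N u + 1) * (l * A) by rewrite mulrA (mulrC (N u + 1)) hlE mul1r.
  by apply: ler_wpM2l => //; lra.
have hz : a2 (ip (h - x) u) <= 0.
  apply: small_le0 => e he.
  pose eta := e / (4 * (N u + 1)).
  have heta : 0 < eta by apply: divr_gt0 => //; lra.
  have hetaE : eta * (N u + 1) = e / 4.
    by rewrite /eta; field; lra.
  have [k1 hk1] := archi_inv heta.
  have [k2 hk2] := convR hx heta.
  pose k := maxn k1 k2.
  have hi := hk1 k (leq_maxl _ _).
  have hc2 := hk2 k (leq_maxr _ _).
  have -> : h - x = (h - f k) + (f k - x) by rewrite addrA subrK.
  rewrite (ipDl hip).
  apply: le_trans (a2D_le _ _) _.
  have t1 := hA k.
  have t2 := CS hip (f k - x) u.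
  have t3 : (N u + 1) * iS R k <= (N u + 1) * eta.
    by apply: ler_wpM2l; [lra | exact: ltW].
  have t4 : N (f k - x) * N u <= eta * N u.
    by apply: ler_wpM2r => //; exact: ltW.
  have t5 : eta * N u <= eta * (N u + 1) by apply: ler_wpM2l; lra.
  lra.
have h0 : ip (h - x) u = 0.
  by apply: a2_eq0; apply/eqP; rewrite eq_le hz a2_ge0.
by rewrite (ip_sym hip) h0 rmorph0.
Qed.

End Proj.

Section Ortho.
Variables (R : realType) (H : lmodType R[i]) (ip : H -> H -> R[i]).
Hypothesis hip : is_inner_product ip.
Local Notation N := (N ip).
Variable X : H -> Prop.
Hypothesis hXs : is_subspace X.
Hypothesis hXdim : infinite_dim X.

Lemma Xsum (I : Type) (r : seq I) (P : pred I) (F : I -> H) :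
  (forall i, X (F i)) -> X (\sum_(i <- r | P i) F i).
Proof.
case: hXs => X0 XD XZ hF.
by apply: (big_ind X) => //; move=> *; apply: XD.
Qed.

Lemma XZ' a x : X x -> X (a *: x).
Proof. by case: hXs => _ _; apply. Qed.

Lemma XB' x y : X x -> X y -> X (x - y).
Proof. case: hXs => _ XD XZ hx hy; rewrite -scaleN1r; apply: XD => //; exact: XZ. Qed.


Lemma ortho_step n (g : nat -> H) :
  (forall i, (i < n)%N -> X (g i)) ->
  (forall i j, (i < n)%N -> (j < n)%N -> ip (g i) (g j) = if i == j then 1 else 0) ->
  exists v, [/\ X v, ip v v = 1 & forall i, (i < n)%N -> ip v (g i) = 0].
Proof.
move=> hgX hgo.
have [w [hwX hwi]] := hXdim n.+1.
pose r (i : 'I_n.+1) := w i - \sum_(j < n) ip (w i) (g j) *: g j.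
have hrX : forall i, X (r i).
  move=> i; apply: XB' => //; apply: Xsum => j; apply: XZ'; exact: hgX.
have hro : forall i k, (k < n)%N -> ip (r i) (g k) = 0.
  move=> i k hk; rewrite (ipBl hip) (ipsuml hip).
  rewrite (bigD1 (Ordinal hk)) //= big1 ?addr0.
    by rewrite (ipZl hip) hgo // eqxx mulr1 subrr.
  move=> j hj; rewrite (ipZl hip) hgo // ifF ?mulr0 //.
  by apply/negP => /eqP hjk; move: hj; apply/negP; rewrite negbK; apply/eqP/val_inj.
case: (pselect (exists i, r i != 0)) => [[i hi]|hall].
  pose s := Num.sqrt (N (r i)).
  have hN : 0 < N (r i).
    rewrite lt_neqAle N_ge0 // andbT; apply/negP => /eqP h.
    by move: hi; rewrite (N_eq0 hip (esym h)) eqxx.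
  have hs : 0 < s by rewrite sqrtr_gt0.
  exists ((s^-1)%:C *: r i); split.
  - by apply: XZ'.
  - rewrite (ipxx hip) (NZ hip) a2_real exprVn sqr_sqrtr ?mulVf //; last exact: ltW.
    by apply: lt0r_neq0.
  - by move=> k hk; rewrite (ipZl hip) hro // mulr0.
have hr0 : forall i, r i = 0.
  move=> i; apply/eqP; apply/negP => /negP hi; apply: hall; by exists i.
exfalso.
pose A : 'M[R[i]]_(n.+1, n) := \matrix_(i, j) ip (w i) (g j).
have nfree : ~~ row_free A.
  rewrite /row_free; apply/negP => /eqP h; have := rank_leq_col A; rewrite h; lia.
have : kermx A != 0 by rewrite kermx_eq0.
case/rowV0Pn => v /sub_kermxP hvA hv0.
have hsum : \sum_(i < n.+1) v 0 i *: w i = 0.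
  have hw : forall i, w i = \sum_(j < n) ip (w i) (g j) *: g j.
    by move=> i; apply/eqP; rewrite -subr_eq0; apply/eqP; exact: hr0.
  rewrite (eq_bigr (fun i => \sum_(j < n) (v 0 i * ip (w i) (g j)) *: g j)); last first.
    move=> i _; rewrite {1}hw scaler_sumr; apply: eq_bigr => j _; exact: scalerA.
  rewrite exchange_big /=; apply: big1 => j _.
  rewrite -scaler_suml.
  have : (v *m A) 0 j = 0 by rewrite hvA mxE.
  rewrite mxE => h.
  have -> : \sum_(i < n.+1) v 0 i * ip (w i) (g j) = 0.
    apply: (etrans _ h); apply: eq_bigr => i _; by rewrite !mxE.
  by rewrite scale0r.
have hc := hwi (fun i => v 0 i) hsum.
move: hv0; apply/negP; rewrite negbK; apply/eqP/rowP => i.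
by rewrite hc !mxE.
Qed.

End Ortho.

Section Seq.
Variables (R : realType) (H : lmodType R[i]) (ip : H -> H -> R[i]).
Hypothesis hip : is_inner_product ip.
Variable X : H -> Prop.
Hypothesis hXs : is_subspace X.
Hypothesis hXdim : infinite_dim X.

Definition nxt (s : seq H) : H := epsilon (inhabits 0)
  (fun v => [/\ X v, ip v v = 1 & forall i, (i < size s)%N -> ip v (nth 0 s i) = 0]).

Fixpoint G n := match n with 0 => [::] | m.+1 => rcons (G m) (nxt (G m)) end.

Definition gs n := nxt (G n).

Lemma GE n : G n = map gs (iota 0 n).
Proof.
elim: n => // n IH.
change (rcons (G n) (gs n) = map gs (iota 0 n.+1)).
by rewrite IH -addn1 iotaD map_cat cats1.
Qed.

Lemma Gspec n : forall i, (i < n)%N ->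
  [/\ X (gs i), ip (gs i) (gs i) = 1 & forall j, (j < i)%N -> ip (gs i) (gs j) = 0].
Proof.
elim: n => // n IH i hi.
have [hlt|heq] : (i < n)%N \/ i = n by lia.
  exact: IH.
subst i.
have hex : exists v, [/\ X v, ip v v = 1 & forall i, (i < n)%N -> ip v (gs i) = 0].
  apply: (ortho_step hip hXs hXdim).
    by move=> i hi'; have [] := IH i hi'.
  move=> i j hi' hj'.
  have [hij|[hij|hij]] : (i < j)%N \/ i = j \/ (j < i)%N by lia.
  - have [_ _ h] := IH j hj'; rewrite (ip_sym hip) h // rmorph0.
    by case: eqP => // e; lia.
  - by subst j; rewrite eqxx; have [] := IH i hi'.
  - have [_ _ h] := IH i hi'; rewrite h //.
    by case: eqP => // e; lia.
have [e1 e2 e3] : [/\ X (gs n), ip (gs n) (gs n) = 1 &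
    forall i, (i < size (G n))%N -> ip (gs n) (nth 0 (G n) i) = 0].
  apply: (epsilon_spec (inhabits 0) (fun v => [/\ X v, ip v v = 1 &
     forall i, (i < size (G n))%N -> ip v (nth 0 (G n) i) = 0])).
  have [v [hv1 hv2 hv3]] := hex; exists v; split => // i.
  rewrite GE size_map size_iota => hin.
  by rewrite (nth_map 0%N) ?size_iota // nth_iota // add0n; apply: hv3.
split => // j hj; have := e3 j; rewrite GE size_map size_iota => /(_ hj).
by rewrite (nth_map 0%N) ?size_iota // nth_iota // add0n.
Qed.

Lemma ortho_seq : exists g : nat -> H,
  (forall i, X (g i)) /\ forall i j, ip (g i) (g j) = if i == j then 1 else 0.
Proof.
exists gs; split.
  by move=> i; have [] := Gspec (ltnSn i).
move=> i j.
have [hij|[hij|hij]] : (i < j)%N \/ i = j \/ (j < i)%N by lia.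
- have [_ _ h] := Gspec (ltnSn j); rewrite (ip_sym hip) h // rmorph0.
  by case: eqP => // e; lia.
- by subst j; rewrite eqxx; have [] := Gspec (ltnSn i).
- have [_ _ h] := Gspec (ltnSn i); rewrite h //.
  by case: eqP => // e; lia.
Qed.

End Seq.

Section Series.
Variables (R : realType) (H : lmodType R[i]) (ip : H -> H -> R[i]).
Hypothesis hip : is_inner_product ip.
Local Notation N := (N ip).

Definition hh : R := (2 : R)^-1.

Lemma hh_ge0 : 0 <= hh. Proof. by rewrite /hh invr_ge0. Qed.
Lemma hh2 : hh * 2 = 1. Proof. by rewrite /hh mulVf // pnatr_eq0. Qed.
Lemma hh_le1 : hh <= 1. Proof. have := hh2; have := hh_ge0; lra. Qed.

Lemma geom (n0 L : nat) :
  \sum_(n0 <= k < n0 + L) hh ^+ k = 2 * hh ^+ n0 - 2 * hh ^+ (n0 + L).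
Proof.
elim: L => [|L IH]; first by rewrite addn0 big_geq // subrr.
rewrite addnS big_nat_recr /=; last by rewrite leq_addr.
rewrite IH exprS.
have e : 2 * (hh * hh ^+ (n0 + L)) = hh ^+ (n0 + L).
  by rewrite mulrA (mulrC 2) hh2 mul1r.
rewrite e; lra.
Qed.

Lemma hh_iS n : hh ^+ n <= iS R n.
Proof.
rewrite /hh /iS exprVn lef_pV2 ?posrE ?exprn_gt0 ?ltr0n //.
rewrite -natrX ler_nat; exact: ltn_expl.
Qed.

Variable e : nat -> H.
Hypothesis heo : forall i j, ip (e i) (e j) = if i == j then 1 else 0.

Lemma N_e i : N (e i) = 1.
Proof. by rewrite /N heo eqxx. Qed.

Lemma N_range (a : nat -> R[i]) n0 L :
  N (\sum_(n0 <= k < n0 + L) a k *: e k) = \sum_(n0 <= k < n0 + L) a2 (a k).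
Proof.
elim: L => [|L IH]; first by rewrite addn0 !big_geq // N0.
have h0 : ip (\sum_(n0 <= k < n0 + L) a k *: e k) (a (n0 + L)%N *: e (n0 + L)%N) = 0.
  rewrite (ipsuml hip) big_seq_cond big1 // => k /andP[]; rewrite mem_index_iota.
  move=> /andP[_ hk] _.
  rewrite (ipZl hip) (ipZr hip) heo ifF ?mulr0 //.
  by apply/negP => /eqP hk'; rewrite hk' ltnn in hk.
rewrite addnS !big_nat_recr /= ?leq_addr // (ND hip) IH (NZ hip) N_e mulr1 h0.
by rewrite /= mulr0 addr0.
Qed.

Lemma ip_e_sum (a : nat -> R[i]) n M : (n < M)%N ->
  ip (e n) (\sum_(k < M) a k *: e k) = (a n)^*.
Proof.
move=> hn; rewrite (ipsumr hip) (bigD1 (Ordinal hn)) //= big1 ?addr0.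
  by rewrite (ipZr hip) heo eqxx mulr1.
move=> k hk; rewrite (ipZr hip) heo ifF ?mulr0 //.
apply/negP => /eqP h; move: hk; apply/negP; rewrite negbK; apply/eqP/val_inj => /=.
by rewrite h.
Qed.

Variable X : H -> Prop.
Hypothesis hX : closed_subspace ip X.
Hypothesis hc : complete_ip ip.
Hypothesis heX : forall i, X (e i).

Lemma series_X (b : nat -> R[i]) (K : R) : 0 <= K ->
  (forall n, a2 (b n) <= K * hh ^+ n) ->
  exists z, X z /\ forall n, ip (e n) z = b n.
Proof.
move=> hK hb.
pose a n := (b n)^*.
pose z (M : nat) := \sum_(k < M) a k *: e k.
have hdiff : forall n m, (n <= m)%N -> N (z m - z n) <= 2 * K * hh ^+ n.
  move=> n m hnm.
  have -> : z m - z n = \sum_(n <= k < n + (m - n)) a k *: e k.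
    rewrite subnKC // /z -!(big_mkord xpredT (fun k => a k *: e k)).
    by rewrite (@big_cat_nat _ _ _ n) //= addrAC subrr add0r.
  rewrite N_range.
  have : \sum_(n <= k < n + (m - n)) a2 (a k) <= \sum_(n <= k < n + (m - n)) K * hh ^+ k.
    by apply: ler_sum => k _; rewrite /a a2J.
  rewrite -mulr_sumr geom => h1; apply: le_trans h1 _.
  have := exprn_ge0 (n + (m - n)) hh_ge0 => h2.
  nra.
have hcz : cauchy_seq ip z.
  apply: (cauchyR hip) => eps heps.
  have heps' : 0 < eps / (2 * K + 1) by apply: divr_gt0 => //; lra.
  have [M0 hM0] := archi_inv heps'.
  have hM : hh ^+ M0 < eps / (2 * K + 1) by apply: le_lt_trans (hh_iS _) (hM0 _ (leqnn _)).
  have hM' : 2 * K * hh ^+ M0 < eps.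
    have : (2 * K + 1) * hh ^+ M0 < eps.
      by rewrite mulrC -ltr_pdivlMr //; lra.
    have := exprn_ge0 M0 hh_ge0; nra.
  exists M0 => m n hm hn.
  have key : forall n m, (M0 <= n)%N -> (n <= m)%N -> N (z m - z n) < eps.
    move=> n' m' hn' hnm; apply: le_lt_trans (hdiff _ _ hnm) _.
    apply: le_lt_trans hM'; apply: ler_wpM2l; first lra.
    exact: ler_wiXn2l hh_ge0 hh_le1 _ _ hn'.
  have [hnm|hmn] := leqP n m; first exact: key.
  by rewrite -(NN hip) opprB; apply: key => //; exact: ltnW.
have [l hl] : exists l, converges_to ip z l by apply: hc.
case: hX => hXs hXc.
exists l; split.
  apply: hXc hl => M; apply: (Xsum hXs) => k; apply: (XZ' hXs); exact: heX.
move=> n; apply: (lim_ip hip hl); exists n.+1 => M hM.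
by rewrite ip_e_sum // /a conjCK.
Qed.

End Series.

Lemma ip_sum_biorth (R : realType) (H : lmodType R[i]) (ip : H -> H -> R[i])
  (hip : is_inner_product ip) n (u t : nat -> H) (c : 'I_n -> R[i]) (j : 'I_n) :
  (forall i k, ip (u i) (t k) = if i == k then 1 else 0) ->
  ip (\sum_(i < n) c i *: u i) (t j) = c j.
Proof.
move=> hut; rewrite (ipsuml hip) (bigD1 j) //= big1 ?addr0.
  by rewrite (ipZl hip) hut eqxx mulr1.
move=> k hk; rewrite (ipZl hip) hut ifF ?mulr0 //.
by apply/negP => /eqP h; move: hk; apply/negP; rewrite negbK; apply/eqP/val_inj.
Qed.

Unset Implicit Arguments.
Theorem lemma4 (R : realType) (H : lmodType R[i]) (ip : H -> H -> R[i])
  (hH : is_hilbert_space ip)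
  (hinf : infinite_dim (fun _ : H => True))
  (X : H -> Prop) (hX : closed_subspace ip X)
  (hXdim : infinite_dim X) (hXcodim : infinite_codim X) :
  exists Q : H -> Prop,
    [/\ closed_subspace ip Q, infinite_dim Q, infinite_codim Q,
        (forall y : H, Q y -> perp ip X y -> y = 0) &
        (forall y : H, perp ip Q y -> perp ip X y -> y = 0)].
Proof.
case: hH => hip hc [d hd].
have hXs := hX.1.
have [g [hgX hgo]] := ortho_seq hip hXs hXdim.
pose e n := g n.*2.
pose o n := g n.*2.+1.
have heo : forall i j, ip (e i) (e j) = if i == j then 1 else 0.
  by move=> i j; rewrite /e hgo (inj_eq (can_inj doubleK)).
have hoo : forall i j, ip (o i) (o j) = if i == j then 1 else 0.
  by move=> i j; rewrite /o hgo eqSS (inj_eq (can_inj doubleK)).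
have heoo : forall i j, ip (e i) (o j) = 0.
  move=> i j; rewrite /e /o hgo ifF //.
  apply/negP => /eqP /(congr1 odd); rewrite /= !odd_double //.
have heX : forall i, X (e i) by move=> i; exact: hgX.
have hoX : forall i, X (o i) by move=> i; exact: hgX.
have [P hP] := choice_nat (fun k => projection hip hX hc (d k)).
pose w n := d n - P n.
have hw : forall n x, X x -> ip x (w n) = 0 by move=> n x hx; have [_ h] := hP n; exact: h.
pose c n : R := hh R ^+ n / (1 + N ip (w n)).
have hcpos : forall n, 0 < c n.
  move=> n; apply: divr_gt0; first by apply: exprn_gt0; rewrite /hh invr_gt0.
  have := N_ge0 hip (w n); lra.
pose f n := (c n)%:C *: w n.
have hNf : forall n, N ip (f n) <= hh R ^+ n.
  move=> n; rewrite (NZ hip) a2_real.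
  have hW := N_ge0 hip (w n).
  have ht0 : 0 <= hh R ^+ n by apply: exprn_ge0; exact: hh_ge0.
  have ht1 : hh R ^+ n <= 1 by apply: exprn_ile1; [exact: hh_ge0 | exact: hh_le1].
  have hcE : c n * (1 + N ip (w n)) = hh R ^+ n by rewrite /c mulfVK //; lra.
  have hc0 := hcpos n.
  clearbody c.
  nra.
have hxf : forall n x, X x -> ip x (f n) = 0.
  by move=> n x hx; rewrite (ipZr hip) hw // mulr0.
have hfx : forall n x, X x -> ip (f n) x = 0.
  by move=> n x hx; rewrite (ip_sym hip) hxf // rmorph0.
pose s n := e n + f n.
have hse : forall i j, ip (s i) (e j) = if i == j then 1 else 0.
  by move=> i j; rewrite (ipDl hip) heo hfx // addr0.
pose S : H -> Prop := fun x => exists n, x = s n.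
exists (perp ip S); split.
- exact: perp_closed_subspace.
- move=> n; exists (fun i : 'I_n => o i); split.
    move=> i x [m ->]; rewrite (ipDl hip) heoo hfx // addr0 //.
  move=> cc hsum j.
  have := ip_sum_biorth hip cc j hoo; rewrite hsum (ip0l hip) => <- //.
- move=> n; exists (fun i : 'I_n => s i) => cc hQ j.
  set y := \sum_(i < n) cc i *: s i in hQ.
  have hy0 : y = 0.
    apply: (ip_def hip); rewrite {1}/y (ipsuml hip) big1 // => i _.
    by rewrite (ipZl hip) hQ ?mulr0 //; exists i.
  have := ip_sum_biorth hip cc j hse; rewrite -/y hy0 (ip0l hip) => <- //.
- move=> y hQ hXy.
  have hdy : forall n, ip (d n) y = 0.
    move=> n; have := hQ (s n) (ex_intro _ n erefl).
    rewrite (ipDl hip) hXy // add0r (ipZl hip) => /eqP; rewrite mulf_eq0 => /orP[].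
      by move/eqP => [] h; have := hcpos n; rewrite h ltxx.
    move/eqP => hwy.
    have -> : d n = w n + P n by rewrite /w subrK.
    by rewrite (ipDl hip) hwy add0r hXy //; have [] := hP n.
  apply: (N_eq0 hip); apply/eqP; rewrite eq_le N_ge0 // andbT.
  apply: small_le0 => eps heps.
  have [n hn] := hd y _ (ltc0R heps).
  rewrite (N_lt hip) in hn.
  have := ND hip y (- d n); rewrite (NN hip) (ipNr hip) ReN (ip_sym hip) hdy rmorph0 /=.
  have := N_ge0 hip (d n); lra.
- move=> y hQy hXy.
  pose b n := - ip (f n) y.
  have hb : forall n, a2 (b n) <= N ip y * hh R ^+ n.
    move=> n; rewrite /b a2N; apply: le_trans (CS hip _ _) _.
    rewrite mulrC; apply: ler_wpM2l; [exact: N_ge0 | exact: hNf].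
  have [z [hzX hz]] := series_X hip heo hX hc heX (N_ge0 hip y) hb.
  have hq : perp ip S (y + z).
    move=> x [n ->]; rewrite /s (ipDr hip) !(ipDl hip) hXy // hz (hfx n z hzX) /b.
    by rewrite add0r addr0 subrr.
  have := hQy _ hq; rewrite (ipDl hip) (hXy z hzX) addr0; exact: (ip_def hip).
Qed.
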